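(* Let $m,n$ be integers with $2\le m<n$, and let $G$ be a Latin square graph $\mathrm{LSG}(m,n)$ (associated with some transversal 2-design $\mathrm{TD}(m,n)$). Then $\alpha(\overline{G})=\Theta(\overline{G})=\vartheta(\overline{G})=n$.
   Context: Graphs are finite, simple, undirected; $\overline{G}$ is the complement, $\alpha$ the independence number, $\Theta(G)=\sup_{k\ge1}\alpha(G^{\boxtimes k})^{1/k}$ the Shannon capacity (with $\boxtimes$ the strong product: distinct $(g,h),(g',h')$ adjacent iff ($g=g'$ or $g\sim g'$) and ($h=h'$ or $h\sim h'$)), and $\vartheta(G)$ the Lovász theta function: the maximum of $\mathrm{Tr}(BJ)$ over positive semidefinite $B$ indexed by $V(G)$ with $\mathrm{Tr}B=1$ and $B_{i,j}=0$ for $\{i,j\}\in E(G)$, $J$ the all-ones matrix. A transversal 2-design $\mathrm{TD}(m,n)$ ($m\ge2,n\ge1$) is a triple $(X,\mathscr G,\mathscr B)$ where $X$ is a set of $mn$ points, $\mathscr G$ is a partition of $X$ into $m$ groups of $n$ points each, and $\mathscr B$ is a family of subsets (blocks) of $X$ such that every block contains exactly one point of each group and every two points in different groups lie together in exactly one block. The Latin square graph $\mathrm{LSG}(m,n)$ of such a design has vertex set $\mathscr B$, two distinct blocks being adjacent iff they intersect in exactly one point. *)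

(* Defs.v *)
From HB Require Import structures.
From mathcomp Require Import all_boot all_order all_algebra.
From mathcomp Require Import classical_sets reals exp.

Set Implicit Arguments.
Unset Strict Implicit.
Unset Printing Implicit Defensive.

Import Order.TTheory GRing.Theory Num.Theory.
Local Open Scope ring_scope.

(* A simple graph on a finite vertex type T is given by a relation e : rel T
   (assumed/produced symmetric and irreflexive). *)

Definition compl_rel (T : finType) (e : rel T) : rel T :=
  fun x y => (x != y) && ~~ e x y.

Definition independentb (T : finType) (e : rel T) (S : {set T}) : bool :=
  [forall x in S, forall y in S, ~~ e x y].

Definition alpha (T : finType) (e : rel T) : nat :=
  \max_(S : {set T} | independentb e S) #|S|.

Definition strong_pow (T : finType) (e : rel T) (k : nat) : rel {ffun 'I_k -> T} :=
  fun x y => (x != y) && [forall i, (x i == y i) || e (x i) (y i)].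

Definition shannon_capacity (R : realType) (T : finType) (e : rel T) : R :=
  sup [set powR ((alpha (@strong_pow T e k))%:R : R) (k%:R)^-1
      | k in [set k : nat | (0 < k)%N]]%classic.

Definition psd (R : realType) (N : nat) (B : 'M[R]_N) : Prop :=
  B^T = B /\ forall x : 'cV[R]_N, 0 <= (x^T *m B *m x) 0 0.

Definition theta_feasible (R : realType) (T : finType) (e : rel T)
    (B : 'M[R]_#|T|) : Prop :=
  [/\ psd B, \tr B = 1 &
      forall i j : 'I_#|T|, e (enum_val i) (enum_val j) -> B i j = 0].

Definition lovasz_theta (R : realType) (T : finType) (e : rel T) : R :=
  sup [set \tr (B *m const_mx 1) | B in [set B | @theta_feasible R T e B]]%classic.

Definition is_TD (m n : nat) (P : finType) (groups blocks : {set {set P}}) : Prop :=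
  [/\ #|P| = (m * n)%N,
      finset.partition groups [set: P] /\
      #|groups| = m,
      (forall g, g \in groups -> #|g| = n),
      (forall B g, B \in blocks -> g \in groups -> #|B :&: g| = 1%N) &
      (forall x y : P, ~~ [exists g in groups, (x \in g) && (y \in g)] ->
         #|[set B in blocks | (x \in B) && (y \in B)]| = 1%N)].

Definition block_type (P : finType) (blocks : {set {set P}}) : finType :=
  {B : {set P} | B \in blocks}.

Definition lsg_rel (P : finType) (blocks : {set {set P}}) : rel (block_type blocks) :=
  fun B C => (val B != val C) && (#|val B :&: val C| == 1%N).
Arguments lsg_rel {P} blocks.
Arguments strong_pow {T} e k.

(* Main.v *)
Require Import Defs.
From HB Require Import structures.
From mathcomp Require Import all_boot all_order all_algebra.
From mathcomp Require Import reals.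
From mathcomp Require Import ring lra.
Set Implicit Arguments. Unset Strict Implicit. Unset Printing Implicit Defensive.
Import Order.TTheory GRing.Theory Num.Theory.

Section Design.
Variables (m n : nat) (P : finType) (groups blocks : {set {set P}}).
Hypotheses (Hm : (2 <= m)%N) (Hmn : (m < n)%N) (HTD : is_TD m n groups blocks).

Let Hpart : finset.partition groups [set: P]. Proof. by case: HTD => _ []. Qed.
Let Hcardg : #|groups| = m. Proof. by case: HTD => _ []. Qed.
Let Hg : forall g, g \in groups -> #|g| = n. Proof. by case: HTD. Qed.
Let HBg : forall B g, B \in blocks -> g \in groups -> #|B :&: g| = 1%N. Proof. by case: HTD. Qed.
Let Hax : forall x y : P, ~~ [exists g in groups, (x \in g) && (y \in g)] ->
         #|[set B in blocks | (x \in B) && (y \in B)]| = 1%N. Proof. by case: HTD. Qed.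

Let Hcover : finset.cover groups = [set: P].
Proof. by case/and3P: Hpart => /eqP. Qed.
Let Htriv : finset.trivIset groups.
Proof. by case/and3P: Hpart. Qed.

Definition grp x := pblock groups x.
Lemma grp_in x : grp x \in groups.
Proof. by apply: pblock_mem; rewrite Hcover inE. Qed.
Lemma in_grp x : x \in grp x.
Proof. by rewrite /grp mem_pblock Hcover inE. Qed.
Lemma grp_eq g x : g \in groups -> x \in g -> grp x = g.
Proof. by move=> gG xg; apply: def_pblock. Qed.

Lemma same_grp x y : [exists g in groups, (x \in g) && (y \in g)] = (y \in grp x).
Proof.
apply/existsP/idP => [[g /and3P [gG xg yg]]|yg].
  by rewrite (grp_eq gG xg).
by exists (grp x); rewrite grp_in in_grp yg.
Qed.

Lemma meet1 B g x y : B \in blocks -> g \in groups -> x \in B -> x \in g -> y \in B -> y \in g -> x = y.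
Proof.
move=> BB gG xB xg yB yg; have /eqP/cards1P [z Hz] := HBg BB gG.
have : x \in B :&: g by rewrite inE xB xg.
have : y \in B :&: g by rewrite inE yB yg.
by rewrite Hz !inE => /eqP -> /eqP ->.
Qed.

Lemma cardI_sum (A B : {set P}) : #|A :&: B| = (\sum_(x in B) (x \in A))%N.
Proof.
rewrite -sum1_card [RHS]big_mkcond /= [LHS]big_mkcond /=; apply: eq_bigr => x _.
by rewrite inE andbC; case: (x \in B); case: (x \in A).
Qed.

Definition cnt x y := #|[set B in blocks | (x \in B) && (y \in B)]|.

Lemma cnt_sum x y : cnt x y = (\sum_(B in blocks) ((x \in B) && (y \in B)))%N.
Proof.
rewrite /cnt -sum1_card [RHS]big_mkcond /= [LHS]big_mkcond /=; apply: eq_bigr => B _.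
by rewrite inE; case: (B \in blocks); case: (x \in B); case: (y \in B).
Qed.

Lemma cnt_diff x y : y \notin grp x -> cnt x y = 1%N.
Proof. by move=> yg; apply: Hax; rewrite same_grp. Qed.

Lemma cnt_same x y : y \in grp x -> x != y -> cnt x y = 0%N.
Proof.
move=> yg xy; apply/eqP; rewrite cards_eq0; apply/eqP/setP => B; rewrite !inE.
apply/negP => /and3P [BB xB yB]; move/eqP: xy; apply.
exact: (meet1 BB (grp_in x) xB (in_grp x) yB yg).
Qed.

Lemma groups_sum1 x : (\sum_(g in groups) (x \in g))%N = 1%N.
Proof.
rewrite (bigD1 (grp x)) ?grp_in //= in_grp big1 // => g /andP [gG gx].
by case: (boolP (x \in g)) => // xg; rewrite (grp_eq gG xg) eqxx in gx.
Qed.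

Lemma other_group x : exists h, (h \in groups) && (h != grp x).
Proof.
have : (0 < #|groups :\ grp x|)%N.
  have := Hm; rewrite -Hcardg (cardsD1 (grp x)) grp_in add1n ltnS.
  by move=> H; apply: leq_trans H.
by case/card_gt0P => h; rewrite !inE => /andP [a b]; exists h; rewrite a b.
Qed.

Lemma cnt_self x : cnt x x = n.
Proof.
have [h /andP [hG hx]] := other_group x.
rewrite cnt_sum.
have -> : (\sum_(B in blocks) ((x \in B) && (x \in B)))%N =
          (\sum_(B in blocks) \sum_(y in h) ((x \in B) && (y \in B)))%N.
  apply: eq_bigr => B BB; rewrite andbb.
  have := HBg BB hG; rewrite cardI_sum => E.
  transitivity ((x \in B) * (\sum_(y in h) (y \in B)))%N; first by rewrite E muln1.
  by rewrite big_distrr /=; apply: eq_bigr => y _; rewrite mulnb.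
rewrite exchange_big /= -(Hg hG) -sum1_card; apply: eq_bigr => y yh.
rewrite -cnt_sum cnt_diff //; apply: contra hx => yg.
by rewrite -(grp_eq hG yh) (grp_eq (grp_in x) yg).
Qed.

Lemma cnt_formula x y : (cnt x y + (y \in grp x) = 1 + n * (x == y))%N.
Proof.
case: (eqVneq x y) => [<-|xy]; first by rewrite cnt_self in_grp muln1 addnC.
case: (boolP (y \in grp x)) => yg; first by rewrite cnt_same // muln0.
by rewrite cnt_diff // muln0.
Qed.


Lemma card_block B : B \in blocks -> #|B| = m.
Proof.
move=> BB; rewrite -sum1_card.
rewrite (eq_bigr (fun x => \sum_(g in groups) (x \in g)))%N; last by move=> x _; rewrite groups_sum1.
rewrite exchange_big /= -Hcardg -sum1_card; apply: eq_bigr => g gG.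
by rewrite -cardI_sum setIC HBg.
Qed.

Lemma sum_D_x (B : {set P}) (F : P -> {set P} -> nat) :
  (\sum_(D in blocks) \sum_(x in B) F x D = \sum_(x in B) \sum_(D in blocks) F x D)%N.
Proof. by rewrite exchange_big. Qed.

Lemma S1 B : B \in blocks -> (\sum_(D in blocks) #|D :&: B| = m * n)%N.
Proof.
move=> BB.
under eq_bigr do rewrite cardI_sum.
rewrite exchange_big /= -(card_block BB) -sum_nat_const; apply: eq_bigr => x _.
by rewrite -(cnt_self x) cnt_sum; apply: eq_bigr => D _; rewrite andbb.
Qed.

Lemma sum_eq_in (x : P) (C : {set P}) : \sum_(y in C) ((x == y) : nat) = ((x \in C) : nat).
Proof.
case: (boolP (x \in C)) => xC.
  by rewrite (bigD1 x) //= eqxx big1 // => y /andP [_ yx]; rewrite eq_sym (negbTE yx).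
by rewrite big1 // => y yC; case: eqP => // xy; rewrite xy yC in xC.
Qed.

Lemma S2 B C : B \in blocks -> C \in blocks ->
  (\sum_(D in blocks) #|D :&: B| * #|D :&: C| + m = n * #|B :&: C| + m * m)%N.
Proof.
move=> BB CB.
have -> : (\sum_(D in blocks) #|D :&: B| * #|D :&: C| =
          \sum_(x in B) \sum_(y in C) cnt x y)%N.
  have E : forall D, (#|D :&: B| * #|D :&: C| =
        \sum_(x in B) \sum_(y in C) (((x \in D) && (y \in D)) : nat))%N.
    move=> D; rewrite !cardI_sum big_distrl /=; apply: eq_bigr => x _.
    by rewrite big_distrr /=; apply: eq_bigr => y _; rewrite mulnb.
  rewrite (eq_bigr _ (fun D _ => E D)).
  rewrite exchange_big /=; apply: eq_bigr => x _.
  by rewrite exchange_big /=; apply: eq_bigr => y _; rewrite cnt_sum.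
have Hm1 : (\sum_(x in B) \sum_(y in C) (y \in grp x) = m)%N.
  rewrite -(card_block BB) -sum1_card; apply: eq_bigr => x _.
  by rewrite -cardI_sum setIC HBg // grp_in.
rewrite -{1}Hm1 -big_split /=.
rewrite (eq_bigr (fun x => \sum_(y in C) (1 + n * (x == y))))%N; last first.
  by move=> x _; rewrite -big_split /=; apply: eq_bigr => y _; rewrite cnt_formula.
rewrite (eq_bigr (fun x => #|C| + n * (x \in C)))%N; last first.
  by move=> x _; rewrite big_split /= sum1_card -big_distrr /= sum_eq_in.
rewrite big_split /= sum_nat_const -big_distrr /= -cardI_sum setIC.
by rewrite (card_block BB) (card_block CB) addnC.
Qed.

Lemma nblocks : #|blocks| = (n * n)%N.
Proof.
have : (0 < #|groups|)%N by rewrite Hcardg; apply: leq_trans Hm.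
case/card_gt0P => g gG.
rewrite -sum1_card (eq_bigr (fun D => #|D :&: g|)); last by move=> D DB; rewrite HBg.
under eq_bigr do rewrite cardI_sum.
rewrite exchange_big /= -{1}(Hg gG) -sum_nat_const; apply: eq_bigr => x _.
by rewrite -(cnt_self x) cnt_sum; apply: eq_bigr => D _; rewrite andbb.
Qed.


Section Real.
Variable R : realType.
Local Open Scope ring_scope.
Let N : R := n%:R.
Let M : R := m%:R.
Let gam : R := (M - 1) / N ^+ 2.
Let Npos : 0 < N.
Proof. by rewrite ltr0n; apply: leq_ltn_trans Hmn. Qed.
Let N0 : N != 0. Proof. by rewrite gt_eqF. Qed.

Definition vv (D B : {set P}) : R := (D == B)%:R - #|D :&: B|%:R / N + gam.

Lemma vv_sym D B : vv D B = vv B D.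
Proof. by rewrite /vv eq_sym setIC. Qed.

Lemma sum_vv_lin B (F : {set P} -> R) :
  \sum_(D in blocks) vv D B * F D =
  \sum_(D in blocks) (D == B)%:R * F D - (\sum_(D in blocks) #|D :&: B|%:R * F D) / N
  + gam * \sum_(D in blocks) F D.
Proof.
rewrite big_distrr /= big_distrl /= -sumrN -!big_split /=; apply: eq_bigr => D _.
by rewrite /vv mulrDl mulrBl; congr (_ - _ + _); rewrite mulrAC.
Qed.

Lemma sum_eqB B (F : {set P} -> R) : B \in blocks ->
  \sum_(D in blocks) (D == B)%:R * F D = F B.
Proof.
move=> BB; rewrite (bigD1 B) //= eqxx mul1r big1 ?addr0 // => D /andP [_ DB].
by rewrite (negbTE DB) mul0r.
Qed.

Lemma S1R B : B \in blocks -> \sum_(D in blocks) (#|D :&: B|%:R : R) = M * N.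
Proof. by move=> BB; rewrite -natr_sum S1 // natrM. Qed.

Lemma S2R B C : B \in blocks -> C \in blocks ->
  \sum_(D in blocks) (#|D :&: B|%:R * #|D :&: C|%:R : R) = N * #|B :&: C|%:R + M * M - M.
Proof.
move=> BB CB; have := congr1 (fun k => k%:R : R) (S2 BB CB).
rewrite natrD natr_sum natrD !natrM => <-.
by rewrite addrK; apply: eq_bigr => D _; rewrite natrM.
Qed.

Lemma nblocksR : \sum_(D in blocks) (1 : R) = N * N.
Proof. by rewrite sumr_const nblocks natrM. Qed.

Lemma vv_sum0 B : B \in blocks -> \sum_(D in blocks) vv D B = 0.
Proof.
move=> BB; have := sum_vv_lin B (fun _ => 1).
under eq_bigr do rewrite mulr1.
move=> ->; rewrite sum_eqB // (eq_bigr (fun D => #|D :&: B|%:R)); last by move=> D _; rewrite mulr1.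
by rewrite S1R // nblocksR /gam; field; exact: N0.
Qed.

Lemma vv_sumC B C : B \in blocks -> C \in blocks ->
  \sum_(D in blocks) vv D B * #|D :&: C|%:R = 0.
Proof.
move=> BB CB; rewrite sum_vv_lin sum_eqB // S2R // S1R // /gam; field; exact: N0.
Qed.

Lemma vv_gram B C : B \in blocks -> C \in blocks ->
  \sum_(D in blocks) vv D B * vv D C = vv B C.
Proof.
move=> BB CB; under eq_bigr do rewrite mulrC.
rewrite sum_vv_lin sum_eqB // vv_sum0 // mulr0 addr0.
under eq_bigr do rewrite mulrC.
by rewrite vv_sumC // mul0r subr0 vv_sym.
Qed.

Let c : R := N ^+ 2 / (N - M + 1).
Let NM : 0 < N - M + 1.
Proof. have : M < N by rewrite ltr_nat. lra. Qed.
Let NM0 : N - M + 1 != 0. Proof. by rewrite gt_eqF. Qed.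
Let c0 : 0 <= c. Proof. by rewrite /c divr_ge0 // ?exprn_ge0 ?ltW. Qed.

Definition YY (B C : {set P}) : R := 1 + c * vv B C.

Lemma YY_diag B : B \in blocks -> YY B B = N.
Proof.
move=> BB; rewrite /YY /vv eqxx setIid card_block // -/M /c /gam.
have -> : (true%:R : R) = 1 by [].
field; rewrite NM0 N0 //.
Qed.

Lemma YY_off B C : B != C -> #|B :&: C| = 1%N -> YY B C = 0.
Proof.
move=> BC I1; rewrite /YY /vv (negbTE BC) I1 /c /gam.
have -> : (false%:R : R) = 0 by [].
field; rewrite NM0 N0 //.
Qed.

Lemma set0_notin : set0 \notin blocks.
Proof.
have : (0 < #|groups|)%N by rewrite Hcardg; apply: leq_trans Hm.
case/card_gt0P => g gG; apply/negP => /HBg /(_ gG); by rewrite set0I cards0.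
Qed.

Definition lamY (D : {set P}) : R := if D == set0 then 1 else c * (D \in blocks)%:R.
Definition gY (D : {set P}) (B : {set P}) : R := if D == set0 then 1 else vv D B.

Lemma YY_gram B C : B \in blocks -> C \in blocks ->
  YY B C = \sum_D lamY D * gY D B * gY D C.
Proof.
move=> BB CB; rewrite (bigD1 set0) //= /lamY /gY eqxx !mul1r /YY; congr (_ + _).
rewrite -vv_gram // big_distrr /= big_mkcond /= [LHS](bigD1 set0) //= (negbTE set0_notin) add0r.
apply: eq_bigr => D D0; rewrite (negbTE D0).
by case: (D \in blocks); rewrite ?mulr1 ?mulr0 ?mul0r // mulrA.
Qed.

Lemma lamY_ge0 D : 0 <= lamY D.
Proof. by rewrite /lamY; case: eqP => // _; apply: mulr_ge0 => //; apply: ler0n. Qed.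


Lemma Yv_gram (u v : block_type blocks) :
  YY (val u) (val v) = \sum_D lamY D * gY D (val u) * gY D (val v).
Proof. by apply: YY_gram; apply: valP. Qed.

Lemma Yv_diag (u : block_type blocks) : YY (val u) (val u) = N.
Proof. by apply: YY_diag; apply: valP. Qed.

Lemma Yv_off (u v : block_type blocks) : u != v ->
  ~~ compl_rel (lsg_rel blocks) u v -> YY (val u) (val v) = 0.
Proof.
move=> uv; rewrite /compl_rel uv /= negbK => /andP [vuv /eqP I1].
exact: YY_off.
Qed.

Lemma lamY0 : lamY set0 = 1. Proof. by rewrite /lamY eqxx. Qed.
Lemma gY0 B : gY set0 B = 1. Proof. by rewrite /gY eqxx. Qed.
Lemma N_ge0 : 0 <= N. Proof. exact: ltW. Qed.
End Real.

Definition Sx x := [set D : block_type blocks | x \in val D].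

Lemma Sx_card x : #|Sx x| = n.
Proof.
rewrite -(card_imset _ val_inj) -(cnt_self x) /cnt.
suff -> : [set val D | D in Sx x] = [set B in blocks | (x \in B) && (x \in B)] by [].
apply/setP => B; rewrite inE andbb; apply/imsetP/idP => [[D] | /andP [BB xB]].
  by rewrite inE => xD ->; rewrite (valP D) xD.
by exists (Sub B BB : block_type blocks); rewrite ?inE /= ?SubK.
Qed.

Lemma cnt_le1 x y : x != y -> (cnt x y <= 1)%N.
Proof. by move=> xy; have := cnt_formula x y; rewrite (negbTE xy) muln0 addn0 => <-; apply: leq_addr. Qed.

Lemma Sx_indep x : independentb (compl_rel (lsg_rel blocks)) (Sx x).
Proof.
apply/forallP => D; apply/implyP; rewrite inE => xD.
apply/forallP => E; apply/implyP; rewrite inE => xE.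
rewrite /compl_rel negb_and negbK; case: (eqVneq D E) => //= DE.
have vDE : val D != val E by apply: contra DE => /eqP /val_inj ->.
rewrite /lsg_rel vDE /= negbK; apply/cards1P; exists x; apply/setP => y; rewrite !inE.
apply/andP/eqP => [[yD yE]|->]; last by [].
apply/eqP; apply: contraT => xy; rewrite eq_sym in xy.
have := cnt_le1 xy; rewrite /cnt.
have sub : [set val D; val E] \subset [set B in blocks | (x \in B) && (y \in B)].
  by apply/subsetP => B; rewrite !inE => /orP [] /eqP ->; rewrite ?(valP D) ?(valP E) ?xD ?xE ?yD ?yE.
have := subset_leq_card sub; rewrite cards2 vDE => H1 H2.
by have := leq_trans H1 H2.
Qed.

End Design.

Section Generic.
Variable R : realType.
Local Open Scope ring_scope.

Lemma gram_ge (I Rr : finType) (Q : I -> I -> R) (lam : Rr -> R) (h : Rr -> I -> R) (r0 : Rr) :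
  (forall x : I -> R, 0 <= \sum_i \sum_j x i * x j * Q i j) ->
  (forall r, 0 <= lam r) -> lam r0 = 1 ->
  \sum_i \sum_j h r0 i * h r0 j * Q i j <=
  \sum_i \sum_j Q i j * (\sum_r lam r * h r i * h r j).
Proof.
move=> Qpsd lam0 lamr0.
have -> : \sum_i \sum_j Q i j * (\sum_r lam r * h r i * h r j) =
   \sum_r lam r * (\sum_i \sum_j h r i * h r j * Q i j).
  rewrite [RHS](eq_bigr (fun r => \sum_i \sum_j lam r * (h r i * h r j * Q i j))); last first.
    by move=> r _; rewrite big_distrr /=; apply: eq_bigr => i _; rewrite big_distrr.
  rewrite [RHS]exchange_big /=; apply: eq_bigr => i _.
  rewrite [RHS]exchange_big /=; apply: eq_bigr => j _.
  rewrite big_distrr /=; apply: eq_bigr => r _.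
  by rewrite mulrC -!mulrA; congr (_ * _); rewrite mulrC -!mulrA; congr (_ * _); rewrite mulrC.
rewrite (bigD1 r0) //= lamr0 mul1r lerDl.
by apply: sumr_ge0 => r _; apply: mulr_ge0.
Qed.

Lemma indep_bound (U Rr : finType) (e : rel U) (Y : U -> U -> R) (d : R)
  (lam : Rr -> R) (g : Rr -> U -> R) (r0 : Rr) :
  (forall u v, Y u v = \sum_r lam r * g r u * g r v) ->
  (forall r, 0 <= lam r) -> lam r0 = 1 -> (forall u, g r0 u = 1) ->
  0 <= d -> (forall u, Y u u = d) -> (forall u v, u != v -> ~~ e u v -> Y u v = 0) ->
  forall S, independentb e S -> #|S|%:R <= d.
Proof.
move=> HY lam0 lamr0 gr0 d0 Yd Y0 S /forallP indS.
pose w u : R := (u \in S)%:R.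
have := @gram_ge U Rr (fun u v => w u * w v) lam g r0.
have psd : forall x : U -> R, 0 <= \sum_i \sum_j x i * x j * (w i * w j).
  move=> x; have -> : \sum_i \sum_j x i * x j * (w i * w j) = (\sum_i x i * w i) ^+ 2.
    rewrite expr2 big_distrl /=; apply: eq_bigr => i _; rewrite big_distrr /=.
    by apply: eq_bigr => j _; rewrite mulrACA.
  exact: sqr_ge0.
move=> /(_ psd lam0 lamr0).
under eq_bigr do under eq_bigr do rewrite !gr0 !mul1r.
under [X in _ <= X -> _]eq_bigr do under eq_bigr do rewrite -HY.
have sw : \sum_i w i = #|S|%:R.
  rewrite -sum1_card natr_sum [RHS]big_mkcond /=; apply: eq_bigr => i _; rewrite /w; by case: (i \in S).
have -> : \sum_i \sum_j w i * w j = #|S|%:R ^+ 2.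
  by rewrite -sw expr2 big_distrl /=; apply: eq_bigr => i _; rewrite big_distrr.
have -> : \sum_i \sum_j w i * w j * Y i j = #|S|%:R * d.
  rewrite -sw big_distrl /=; apply: eq_bigr => i _.
  rewrite /w; case: (boolP (i \in S)) => iS; last by rewrite big1 ?mul0r // => j _; rewrite !mul0r.
  rewrite mul1r (bigD1 i) //= Yd iS !mul1r big1 ?addr0 // => j ji.
  case: (boolP (j \in S)) => jS; last by rewrite mulr0 mul0r.
  rewrite Y0 ?mulr0 //; first by rewrite eq_sym.
  by have := indS i; rewrite iS => /forallP /(_ j); rewrite jS.
case: (posnP #|S|) => [->|Sp]; first by [].
by rewrite expr2 ler_pM2l // ltr0n.
Qed.

Lemma theta_bound (T Rr : finType) (e : rel T) (Y : T -> T -> R) (d : R)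
  (lam : Rr -> R) (g : Rr -> T -> R) (r0 : Rr) :
  (forall u v, Y u v = \sum_r lam r * g r u * g r v) ->
  (forall r, 0 <= lam r) -> lam r0 = 1 -> (forall u, g r0 u = 1) ->
  (forall u, Y u u = d) -> (forall u v, u != v -> ~~ e u v -> Y u v = 0) ->
  forall B, @theta_feasible R T e B -> \tr (B *m const_mx 1) <= d.
Proof.
move=> HY lam0 lamr0 gr0 Yd Y0 B [[Bsym Bpsd] trB Be].
have psd : forall x : 'I_#|T| -> R, 0 <= \sum_i \sum_j x i * x j * B i j.
  move=> x; have := Bpsd (\col_i x i).
  rewrite mxE exchange_big /=.
  congr (_ <= _); apply: eq_bigr => j _; rewrite !mxE big_distrl /=; apply: eq_bigr => i _.
  by rewrite !mxE mulrAC mulrC.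
have := @gram_ge 'I_#|T| Rr B lam (fun r i => g r (enum_val i)) r0 psd lam0 lamr0.
under eq_bigr do under eq_bigr do rewrite !gr0 !mul1r.
have -> : \tr (B *m const_mx 1) = \sum_i \sum_j B i j.
  by rewrite /mxtrace; apply: eq_bigr => i _; rewrite mxE; apply: eq_bigr => j _; rewrite mxE mulr1.
move/le_trans; apply.
have -> : \sum_i \sum_j B i j * (\sum_r lam r * g r (enum_val i) * g r (enum_val j)) = \sum_i B i i * d.
  apply: eq_bigr => i _; rewrite (bigD1 i) //= -HY Yd big1 ?addr0 // => j ji.
  rewrite -HY; case: (boolP (e (enum_val i) (enum_val j))) => Eij; first by rewrite Be ?mul0r.
  rewrite Y0 ?mulr0 //.
  by apply: contra ji => /eqP /enum_val_inj ->.
by rewrite -big_distrl /=; move: trB; rewrite /mxtrace => ->; rewrite mul1r.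
Qed.

Lemma gram_pow (T Rr : finType) (lam : Rr -> R) (g : Rr -> T -> R) k (u v : {ffun 'I_k -> T}) :
  \prod_i (\sum_r lam r * g r (u i) * g r (v i)) =
  \sum_(rho : {ffun 'I_k -> Rr}) (\prod_i lam (rho i)) * (\prod_i g (rho i) (u i)) * (\prod_i g (rho i) (v i)).
Proof.
rewrite bigA_distr_bigA /=; apply: eq_bigr => rho _.
by rewrite -!big_split.
Qed.

Lemma strong_bound (T Rr : finType) (e : rel T) (Y : T -> T -> R) (d : R)
  (lam : Rr -> R) (g : Rr -> T -> R) (r0 : Rr) k :
  (forall u v, Y u v = \sum_r lam r * g r u * g r v) ->
  (forall r, 0 <= lam r) -> lam r0 = 1 -> (forall u, g r0 u = 1) ->
  0 <= d -> (forall u, Y u u = d) -> (forall u v, u != v -> ~~ e u v -> Y u v = 0) ->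
  forall S, independentb (strong_pow e k) S -> #|S|%:R <= d ^+ k.
Proof.
move=> HY lam0 lamr0 gr0 d0 Yd Y0.
apply: (@indep_bound {ffun 'I_k -> T} {ffun 'I_k -> Rr} (strong_pow e k) (fun u v => \prod_i Y (u i) (v i)) (d ^+ k)
   (fun rho => \prod_i lam (rho i)) (fun rho u => \prod_i g (rho i) (u i)) [ffun=> r0]).
- by move=> u v; rewrite -gram_pow; apply: eq_bigr => i _; rewrite HY.
- by move=> rho; apply: prodr_ge0 => i _.
- by rewrite big1 // => i _; rewrite ffunE.
- by move=> u; rewrite big1 // => i _; rewrite ffunE.
- exact: exprn_ge0.
- by move=> u; rewrite (eq_bigr (fun _ => d)) ?prodr_const ?card_ord // => i _.
- move=> u v uv; rewrite /strong_pow uv /= => /forallPn [i]; rewrite negb_or => /andP [ui ei].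
  by rewrite (bigD1 i) //= Y0 ?mul0r.
Qed.

Lemma sum_enum_val (T : finType) (F : T -> R) :
  \sum_(i < #|T|) F (@enum_val T xpredT i) = \sum_t F t.
Proof. by rewrite -(@big_enum_val _ _ _ T xpredT). Qed.

Lemma theta_lower (T : finType) (e : rel T) (S : {set T}) :
  independentb e S -> (0 < #|S|)%N ->
  exists B, @theta_feasible R T e B /\ \tr (B *m const_mx 1) = #|S|%:R.
Proof.
move=> /forallP indS Sp.
pose s (i : 'I_#|T|) : R := (@enum_val T xpredT i \in S)%:R.
have ss : \sum_i s i = #|S|%:R.
  rewrite /s (sum_enum_val (fun t => (t \in S)%:R)) -sum1_card natr_sum [RHS]big_mkcond /=.
  by apply: eq_bigr => t _; case: (t \in S).
have ssq : forall i, s i * s i = s i by move=> i; rewrite /s; case: (_ \in S); rewrite ?mulr1 ?mulr0.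
have Sp' : (#|S|%:R : R) != 0 by rewrite pnatr_eq0 -lt0n.
exists (\matrix_(i, j) (s i * s j / #|S|%:R)); split; [split; [split| |]|].
- by apply/matrixP => i j; rewrite !mxE [s j * _]mulrC.
- move=> x; rewrite mxE.
  transitivity (0 <= \sum_j (\sum_i x i 0 * s i / #|S|%:R) * (x j 0 * s j)).
    congr (_ <= _); apply: eq_bigr => j _; rewrite mxE big_distrl /= big_distrl /=.
    by apply: eq_bigr => i _; rewrite !mxE; ring.
  rewrite -big_distrr /= -big_distrl /= mulrAC -expr2.
  by apply: divr_ge0; [apply: sqr_ge0 | apply: ler0n].
- rewrite /mxtrace (eq_bigr (fun i => s i / #|S|%:R)); last by move=> i _; rewrite mxE ssq.
  by rewrite -big_distrl /= ss divff.
- move=> i j eij; rewrite mxE /s.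
  case: (boolP (enum_val i \in S)) => iS; last by rewrite !mul0r.
  case: (boolP (enum_val j \in S)) => jS; last by rewrite mulr0 mul0r.
  by have := indS (enum_val i); rewrite iS => /forallP /(_ (enum_val j)); rewrite jS eij.
- rewrite /mxtrace (eq_bigr (fun i => s i * #|S|%:R / #|S|%:R)); last first.
    move=> i _; rewrite mxE (eq_bigr (fun j => s i * s j / #|S|%:R)); last by move=> j _; rewrite !mxE mulr1.
    by rewrite -big_distrl /= -big_distrr /= ss.
  by under eq_bigr do rewrite mulfK //; rewrite ss.
Qed.

Lemma strong_lower (T : finType) (e : rel T) (S : {set T}) k :
  independentb e S ->
  independentb (strong_pow e k) [set u : {ffun 'I_k -> T} | u \in ffun_on S] /\
  #|[set u : {ffun 'I_k -> T} | u \in ffun_on S]| = (#|S| ^ k)%N.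
Proof.
move=> /forallP indS; split; last by rewrite cardsE card_ffun_on card_ord.
apply/forallP => u; apply/implyP; rewrite inE => /ffun_onP uS.
apply/forallP => v; apply/implyP; rewrite inE => /ffun_onP vS.
rewrite /strong_pow negb_and negbK; case: (eqVneq u v) => //= uv.
apply/forallPn; have [i ui] : exists i, u i != v i.
  case: (pickP (fun i => u i != v i)) => [i H|H]; first by exists i.
  by move: uv; rewrite (_ : u = v) ?eqxx //; apply/ffunP => i; apply/eqP; move: (H i) => /= /negbFE.
exists i; rewrite negb_or ui /=.
by have := indS (u i); rewrite uS => /forallP /(_ (v i)); rewrite vS.
Qed.
End Generic.

From mathcomp Require Import classical_sets reals exp.
Unset Implicit Arguments.

Theorem mainTheorem2 (m n : nat) (Hm : (2 <= m)%N) (Hmn : (m < n)%N)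
    (P : finType) (groups blocks : {set {set P}})
    (HTD : is_TD m n groups blocks) (R : realType) :
  [/\ alpha (compl_rel (lsg_rel blocks)) = n,
      shannon_capacity R (compl_rel (lsg_rel blocks)) = (n%:R)%R &
      lovasz_theta R (compl_rel (lsg_rel blocks)) = (n%:R)%R].
Proof.
set e := compl_rel (lsg_rel blocks).
have [x _] : exists x : P, true.
  have : (0 < #|P|)%N.
    by case: HTD => -> *; rewrite muln_gt0; apply/andP; split; [apply: leq_trans Hm | apply: leq_ltn_trans Hmn].
  by case/card_gt0P => x _; exists x.
have Hgram := Yv_gram Hm Hmn HTD R.
have Hl0 := lamY_ge0 blocks Hmn R.
have Hl1 := lamY0 m n blocks R.
have Hg1 : forall u : block_type blocks, gY m n R finset.set0 (val u) = 1%R by move=> u; exact: gY0.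
have Hd0 := N_ge0 Hmn R.
have Hdiag := Yv_diag Hmn HTD R.
have Hoff := @Yv_off m n P blocks Hmn R.
have alk : forall k, alpha (strong_pow e k) = (n ^ k)%N.
  move=> k; apply/eqP; rewrite eqn_leq; apply/andP; split.
    apply/bigmax_leqP => S HS.
    have := strong_bound Hgram Hl0 Hl1 Hg1 Hd0 Hdiag Hoff HS.
    by rewrite -natrX ler_nat.
  have [Hi Hc] := strong_lower k (Sx_indep Hm HTD x).
  by rewrite -(Sx_card Hm HTD x) -Hc; apply: leq_bigmax_cond.
have al : alpha e = n.
  apply/eqP; rewrite eqn_leq; apply/andP; split.
    apply/bigmax_leqP => S HS.
    have := indep_bound Hgram Hl0 Hl1 Hg1 Hd0 Hdiag Hoff HS.
    by rewrite ler_nat.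
  rewrite -{1}(Sx_card Hm HTD x); exact: (@leq_bigmax_cond _ (fun S => independentb e S) (fun S => #|S|) _ (Sx_indep Hm HTD x)).
split => //.
- rewrite /shannon_capacity.
  suff -> : [set powR ((alpha (strong_pow e k))%:R : R)%R (k%:R)^-1%R
      | k in [set k : nat | (0 < k)%N]]%classic = [set (n%:R : R)%R]%classic by rewrite sup1.
  apply/seteqP; split => y /=.
    case=> k /= k0 <-; rewrite alk natrX -powR_mulrn ?ler0n // -powRrM mulfV ?powRr1 ?ler0n //.
    by rewrite pnatr_eq0 -lt0n.
  move=> ->; exists 1%N => //=; by rewrite alk expn1 invr1 powRr1 ?ler0n.
- rewrite /lovasz_theta.
  set E := [set _ | _ in _]%classic.
  have NE : E (n%:R : R)%R.
    have [|B [HB HtrB]] := theta_lower R (Sx_indep Hm HTD x).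
      by rewrite (Sx_card Hm HTD x); apply: leq_ltn_trans Hmn.
    by exists B => //; rewrite HtrB (Sx_card Hm HTD x).
  have ubE : ubound E (n%:R : R)%R.
    by move=> y [B HB <-]; apply: (theta_bound Hgram Hl0 Hl1 Hg1 Hdiag Hoff HB).
  apply/le_anti; apply/andP; split.
    by apply: ge_sup => //; exists (n%:R : R)%R.
  have hE : has_ubound E by exists (n%:R : R)%R.
  exact: (ub_le_sup hE NE).
Qed.
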